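(* Let $p>1$ be an integer. Let $A$ be the free abelian group on $a,b,c$, let $B=\langle A,t\mid t^{-1}at=ab,\ t^{-1}bt=bc,\ t^{-1}ct=c\rangle$ (an HNN-extension, torsion-free nilpotent of class 3), let $F=\langle f\rangle$ be infinite cyclic, $K=B\times F$, and let $G_p=\langle K,s\rangle\le\overline{K}$ where $s$ is the unique $p$-th root of $bf$ in the rational closure $\overline{K}$. Then $G_p$ is directly indecomposable (it has no nontrivial direct decomposition); in particular it has no nontrivial abelian direct factor.
   Context: The rational closure $\overline{K}$ of a finitely generated torsion-free nilpotent group $K$ is the torsion-free nilpotent group containing $K$ in which every element has a unique $n$-th root for each $n\ge1$ and every element has a positive power in $K$. *)

(* Defs.v *)
From Stdlib Require Import ZArith List.
Import ListNotations.

Record Group := {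
  carrier :> Type;
  gmul : carrier -> carrier -> carrier;
  gone : carrier;
  ginv : carrier -> carrier;
  gmulA : forall x y z, gmul x (gmul y z) = gmul (gmul x y) z;
  gmul1l : forall x, gmul gone x = x;
  gmulVl : forall x, gmul (ginv x) x = gone
}.

Arguments gmul {g} _ _.
Arguments gone {g}.
Arguments ginv {g} _.

Section Defs.
Variable G : Group.

Fixpoint npow (x : G) (n : nat) : G :=
  match n with O => gone | S k => gmul x (npow x k) end.

Definition zpow (x : G) (z : Z) : G :=
  match z with
  | Z0 => gone
  | Zpos q => npow x (Pos.to_nat q)
  | Zneg q => ginv (npow x (Pos.to_nat q))
  end.

Definition conj (x y : G) : G := gmul (ginv y) (gmul x y).
Definition comm (x y : G) : G := gmul (ginv x) (gmul (ginv y) (gmul x y)).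

Fixpoint comm_iter (x : G) (ys : list G) : G :=
  match ys with [] => x | y :: ys' => comm_iter (comm x y) ys' end.

Definition nilpotent : Prop :=
  exists c : nat, forall (x : G) (ys : list G), length ys = c -> comm_iter x ys = gone.

Definition torsion_free : Prop :=
  forall (x : G) (n : nat), (0 < n)%nat -> npow x n = gone -> x = gone.

Definition is_subgroup (H : G -> Prop) : Prop :=
  H gone /\ (forall x y, H x -> H y -> H (gmul x y)) /\ (forall x, H x -> H (ginv x)).

Inductive gen (S : G -> Prop) : G -> Prop :=
  | gen_in : forall x, S x -> gen S x
  | gen_one : gen S gone
  | gen_mul : forall x y, gen S x -> gen S y -> gen S (gmul x y)
  | gen_inv : forall x, gen S x -> gen S (ginv x).

Definition direct_decomposition (Gr H L : G -> Prop) : Prop :=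
  is_subgroup H /\ is_subgroup L /\
  (forall x, H x -> Gr x) /\ (forall x, L x -> Gr x) /\
  (forall g h, Gr g -> H h -> H (conj h g)) /\
  (forall g l, Gr g -> L l -> L (conj l g)) /\
  (forall x, H x -> L x -> x = gone) /\
  (forall g, Gr g -> exists h l, H h /\ L l /\ g = gmul h l).

Definition trivial_sub (H : G -> Prop) : Prop := forall x, H x -> x = gone.

Definition directly_indecomposable (Gr : G -> Prop) : Prop :=
  forall H L, direct_decomposition Gr H L -> trivial_sub H \/ trivial_sub L.

End Defs.

Arguments npow {G} _ _.
Arguments zpow {G} _ _.
Arguments conj {G} _ _.
Arguments comm {G} _ _.
Arguments nilpotent G : clear implicits.
Arguments torsion_free G : clear implicits.
Arguments gen {G} _ _.
Arguments directly_indecomposable {G} _.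

(* Main.v *)
Require Import Defs.
From Stdlib Require Import ZArith List Lia Classical.

Notation "x ** y" := (gmul x y) (at level 40, left associativity).

Section Basic.
Variable G : Group.
Implicit Types x y g : G.

Lemma gmulVr x : x ** ginv x = gone.
Proof.
  assert (H : (x ** ginv x) ** (x ** ginv x) = x ** ginv x).
  { rewrite <- gmulA, (gmulA _ (ginv x) x), gmulVl, gmul1l. reflexivity. }
  transitivity (ginv (x ** ginv x) ** (x ** ginv x) ** (x ** ginv x)).
  - rewrite gmulVl, gmul1l. reflexivity.
  - rewrite <- gmulA, H, gmulVl. reflexivity.
Qed.

Lemma gmul1r x : x ** gone = x.
Proof. rewrite <- (gmulVl G x), gmulA, gmulVr, gmul1l. reflexivity. Qed.

Lemma gcancel_l x y (z : G) : x ** y = x ** z -> y = z.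
Proof.
  intro H. rewrite <- (gmul1l G y), <- (gmul1l G z), <- (gmulVl G x), <- !gmulA, H.
  reflexivity.
Qed.

Lemma gcancel_r x y (z : G) : y ** x = z ** x -> y = z.
Proof.
  intro H. rewrite <- (gmul1r y), <- (gmul1r z), <- (gmulVr x), !gmulA, H.
  reflexivity.
Qed.

Lemma ginv_uniq x y : x ** y = gone -> y = ginv x.
Proof.
  intro H. apply (gcancel_l x). rewrite H, gmulVr. reflexivity.
Qed.

Lemma ginvK x : ginv (ginv x) = x.
Proof. symmetry. apply ginv_uniq. apply gmulVl. Qed.

Lemma ginvM x y : ginv (x ** y) = ginv y ** ginv x.
Proof.
  symmetry. apply ginv_uniq.
  rewrite <- gmulA, (gmulA _ y), gmulVr, gmul1l, gmulVr. reflexivity.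
Qed.

Lemma ginv1 : ginv (@gone G) = gone.
Proof. symmetry. apply ginv_uniq. apply gmul1l. Qed.

Lemma mulKV x y : ginv x ** (x ** y) = y.
Proof. rewrite gmulA, gmulVl, gmul1l. reflexivity. Qed.
Lemma mulVK x y : x ** (ginv x ** y) = y.
Proof. rewrite gmulA, gmulVr, gmul1l. reflexivity. Qed.
Lemma mulKr x y : x ** y ** ginv y = x.
Proof. rewrite <- gmulA, gmulVr, gmul1r. reflexivity. Qed.
Lemma mulVr x y : x ** ginv y ** y = x.
Proof. rewrite <- gmulA, gmulVl, gmul1r. reflexivity. Qed.

Definition commutes x y := x ** y = y ** x.

Lemma commutes_sym x y : commutes x y -> commutes y x.
Proof. unfold commutes; auto. Qed.
Lemma commutes_refl x : commutes x x.
Proof. reflexivity. Qed.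
Lemma commutes_one x : commutes x gone.
Proof. unfold commutes. rewrite gmul1l, gmul1r. reflexivity. Qed.
Lemma commutes_mul x y (z : G) : commutes x y -> commutes x z -> commutes x (y ** z).
Proof.
  unfold commutes; intros H1 H2. rewrite gmulA, H1, <- gmulA, H2, gmulA. reflexivity.
Qed.
Lemma commutes_inv x y : commutes x y -> commutes x (ginv y).
Proof.
  unfold commutes; intros H.
  apply (gcancel_l y). rewrite gmulA, <- H, <- gmulA, gmulVr, gmul1r, mulVK. reflexivity.
Qed.

Lemma npow_add x m n : npow x (m + n) = npow x m ** npow x n.
Proof.
  induction m; simpl. rewrite gmul1l; reflexivity.
  rewrite IHm, gmulA. reflexivity.
Qed.

Lemma npow_commx x n : commutes x (npow x n).
Proof.
  induction n; simpl. apply commutes_one. apply commutes_mul; auto. apply commutes_refl.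
Qed.

Lemma Z_cases (z : Z) : (exists n, z = Z.of_nat n) \/ (exists n, z = (- Z.of_nat (S n))%Z).
Proof.
  destruct (Z_le_gt_dec 0 z).
  - left. exists (Z.to_nat z). lia.
  - right. exists (Z.to_nat (- z) - 1)%nat. lia.
Qed.

Lemma zpow_nat x n : zpow x (Z.of_nat n) = npow x n.
Proof.
  destruct n. reflexivity. simpl. rewrite SuccNat2Pos.id_succ. reflexivity.
Qed.

Lemma zpow_opp x z : zpow x (- z) = ginv (zpow x z).
Proof.
  destruct z; simpl. rewrite ginv1; reflexivity. reflexivity. rewrite ginvK; reflexivity.
Qed.

Lemma zpow_succ x z : zpow x (z + 1) = zpow x z ** x.
Proof.
  destruct (Z_cases z) as [[n ->]|[n ->]].
  - replace (Z.of_nat n + 1)%Z with (Z.of_nat (S n)) by lia.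
    rewrite !zpow_nat. simpl. apply npow_commx.
  - replace (- Z.of_nat (S n) + 1)%Z with (- Z.of_nat n)%Z by lia.
    rewrite !zpow_opp, !zpow_nat. simpl. rewrite ginvM, mulVr. reflexivity.
Qed.

Lemma zpow_pred x z : zpow x (z - 1) = zpow x z ** ginv x.
Proof.
  replace z with ((z - 1) + 1)%Z at 2 by lia. rewrite zpow_succ, mulKr. reflexivity.
Qed.

Lemma zpow0 x : zpow x 0 = gone.
Proof. reflexivity. Qed.
Lemma zpow1 x : zpow x 1 = x.
Proof. simpl. apply gmul1r. Qed.

Lemma Zind (P : Z -> Prop) : P 0%Z -> (forall n, P n -> P (n + 1)%Z) ->
  (forall n, P n -> P (n - 1)%Z) -> forall n, P n.
Proof.
  intros H0 Hs Hp n. induction n using Z.peano_ind; auto.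
  - rewrite <- Z.add_1_r. auto.
  - rewrite <- Z.sub_1_r. auto.
Qed.

Lemma zpow_add x m n : zpow x (m + n) = zpow x m ** zpow x n.
Proof.
  revert n. apply Zind.
  - rewrite Z.add_0_r, zpow0, gmul1r. reflexivity.
  - intros n IH. rewrite Z.add_assoc, !zpow_succ, IH, gmulA. reflexivity.
  - intros n IH. rewrite Z.add_sub_assoc, !zpow_pred, IH, gmulA. reflexivity.
Qed.

Lemma zpow_mulZ x m n : zpow x (m * n) = zpow (zpow x m) n.
Proof.
  revert n. apply Zind.
  - rewrite Z.mul_0_r. reflexivity.
  - intros n IH. rewrite Z.mul_add_distr_l, Z.mul_1_r, zpow_add, zpow_succ, IH. reflexivity.
  - intros n IH. rewrite Z.mul_sub_distr_l, Z.mul_1_r, <- Z.add_opp_r, zpow_add,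
      zpow_pred, IH, zpow_opp. reflexivity.
Qed.

Lemma commutes_zpow x y n : commutes x y -> commutes x (zpow y n).
Proof.
  intro H. revert n. apply Zind.
  - apply commutes_one.
  - intros n IH. rewrite zpow_succ. apply commutes_mul; auto.
  - intros n IH. rewrite zpow_pred. apply commutes_mul; auto. apply commutes_inv; auto.
Qed.

Lemma commutes_zpow2 x y m n : commutes x y -> commutes (zpow x m) (zpow y n).
Proof.
  intro H. apply commutes_zpow, commutes_sym, commutes_zpow, commutes_sym, H.
Qed.

Lemma zpow_mulC x y n : commutes x y -> zpow (x ** y) n = zpow x n ** zpow y n.
Proof.
  intro H. revert n. apply Zind.
  - rewrite !zpow0, gmul1l. reflexivity.
  - intros n IH. rewrite !zpow_succ, IH.
    assert (C : commutes (zpow y n) x) by (apply commutes_sym, commutes_zpow, H).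
    rewrite <- !gmulA. f_equal. rewrite !gmulA. rewrite C. reflexivity.
  - intros n IH. rewrite !zpow_pred, IH, ginvM.
    assert (C : commutes (zpow y (n - 1)) (ginv x)).
    { apply commutes_sym, commutes_zpow, commutes_sym, commutes_inv, commutes_sym, H. }
    rewrite <- !gmulA. f_equal. rewrite gmulA, <- zpow_pred, C. reflexivity.
Qed.

Lemma npow_zpow x n : npow x n = zpow x (Z.of_nat n).
Proof. rewrite zpow_nat. reflexivity. Qed.

Lemma zpow_morph (phi : G -> G) x n :
  (forall u v, phi (u ** v) = phi u ** phi v) -> (forall u, phi (ginv u) = ginv (phi u)) ->
  phi gone = gone -> phi (zpow x n) = zpow (phi x) n.
Proof.
  intros Hm Hi H1. revert n. apply Zind.
  - apply H1.
  - intros n IH. rewrite !zpow_succ, Hm, IH. reflexivity.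
  - intros n IH. rewrite !zpow_pred, Hm, Hi, IH. reflexivity.
Qed.

Lemma conj_mul x y g : conj (x ** y) g = conj x g ** conj y g.
Proof. unfold conj. rewrite !gmulA, mulKr. reflexivity. Qed.
Lemma conj_inv x g : conj (ginv x) g = ginv (conj x g).
Proof. unfold conj. rewrite !ginvM, ginvK, gmulA. reflexivity. Qed.
Lemma conj_one g : conj gone g = gone.
Proof. unfold conj. rewrite gmul1l, gmulVl. reflexivity. Qed.
Lemma conj_zpow x g n : conj (zpow x n) g = zpow (conj x g) n.
Proof. apply (zpow_morph (fun y => conj y g)); auto using conj_mul, conj_inv, conj_one. Qed.

Lemma conj_eq x g : g ** conj x g = x ** g.
Proof. unfold conj. rewrite mulVK. reflexivity. Qed.

Lemma commutes_conj x g : commutes x g -> conj x g = x.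
Proof. unfold commutes, conj. intro H. rewrite H, mulKV. reflexivity. Qed.

Lemma comm_one_commutes x y : comm x y = gone -> commutes x y.
Proof.
  unfold comm, commutes. intro H.
  apply ginv_uniq in H. rewrite ginvK in H.
  rewrite <- H at 2. rewrite mulVK. reflexivity.
Qed.

End Basic.

Section DD.
Variable G : Group.
Implicit Types x y g : G.

Lemma sub_zpow (H : G -> Prop) x n : is_subgroup G H -> H x -> H (zpow x n).
Proof.
  intros [H1 [Hm Hi]] Hx. revert n. apply Zind.
  - apply H1.
  - intros n IH. rewrite zpow_succ. auto.
  - intros n IH. rewrite zpow_pred. auto.
Qed.

Lemma sub_comm (H : G -> Prop) x y : is_subgroup G H -> H x -> H y -> H (comm x y).
Proof. intros [H1 [Hm Hi]] Hx Hy. unfold comm. auto. Qed.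

Lemma dd_commute (Gr H L : G -> Prop) h l : direct_decomposition G Gr H L -> H h -> L l -> commutes G h l.
Proof.
  intros [SH [SL [HG [LG [Hn [Ln [Hint Hdec]]]]]]] Hh Hl.
  apply comm_one_commutes. apply Hint.
  - unfold comm. destruct SH as [_ [Hm Hi]]. apply Hm. auto. apply (Hn l h); auto.
  - unfold comm. destruct SL as [_ [Lm Li]].
    replace (ginv h ** (ginv l ** (h ** l))) with (conj (ginv l) h ** l).
    + apply Lm; auto.
    + unfold conj. rewrite !gmulA. reflexivity.
Qed.

Lemma dd_sym (Gr H L : G -> Prop) : direct_decomposition G Gr H L -> direct_decomposition G Gr L H.
Proof.
  intros D. pose proof D as [SH [SL [HG [LG [Hn [Ln [Hint Hdec]]]]]]].
  split; [exact SL|]. split; [exact SH|]. do 4 (split; [auto|]). split.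
  - intros x Lx Hx. auto.
  - intros g Hg. destruct (Hdec g Hg) as [h [l [Hh [Hl ->]]]].
    exists l, h. split; [exact Hl|]. split; [exact Hh|]. apply (dd_commute _ _ _ _ _ D); auto.
Qed.

Lemma comm_char x y w : y ** x ** w = x ** y -> comm x y = w.
Proof.
  intro E. unfold comm. rewrite <- E, <- !gmulA, mulKV, mulKV. reflexivity.
Qed.

Lemma comm_eq x y : y ** x ** comm x y = x ** y.
Proof. unfold comm. rewrite <- gmulA, mulVK, mulVK. reflexivity. Qed.

Lemma comm_central x y z1 z2 :
  commutes G z1 x -> commutes G z1 y -> commutes G z1 z2 -> commutes G z2 x -> commutes G z2 y ->
  comm (x ** z1) (y ** z2) = comm x y.
Proof.
  intros c1x c1y c12 c2x c2y. apply comm_char.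
  assert (c1w : commutes G z1 (comm x y)).
  { unfold comm. apply commutes_mul. apply commutes_inv; auto.
    apply commutes_mul. apply commutes_inv; auto. apply commutes_mul; auto. }
  set (w := comm x y) in *.
  assert (E1 : y ** z2 ** (x ** z1) ** w = y ** x ** w ** z2 ** z1).
  { rewrite !gmulA. rewrite <- (gmulA _ y z2 x), c2x, gmulA.
    rewrite <- (gmulA _ (y ** x ** z2) z1 w), c1w.
    rewrite !gmulA. rewrite <- (gmulA _ (y ** x) z2 w).
    rewrite <- (gmulA _ (y ** x) w z2).
    assert (c2w : commutes G z2 w).
    { unfold w, comm. apply commutes_mul. apply commutes_inv; auto.
      apply commutes_mul. apply commutes_inv; auto. apply commutes_mul; auto. }
    rewrite c2w. reflexivity. }
  rewrite E1. unfold w. rewrite comm_eq.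
  rewrite !gmulA. rewrite <- (gmulA _ x z1 y), c1y, gmulA.
  rewrite <- !gmulA. f_equal. f_equal. symmetry. apply c12.
Qed.

End DD.

Section Main.
Variable p : nat.
Variable hp : (1 < p)%nat.
Variable M : Group.
Variables a b c t f : M.
Variable hab : gmul a b = gmul b a.
Variable hac : gmul a c = gmul c a.
Variable hbc : gmul b c = gmul c b.
Variable hta : conj a t = gmul a b.
Variable htb : conj b t = gmul b c.
Variable htc : conj c t = c.
Variable hfa : gmul f a = gmul a f.
Variable hfb : gmul f b = gmul b f.
Variable hfc : gmul f c = gmul c f.
Variable hft : gmul f t = gmul t f.
Variable hK : forall x y z n m : Z,
      gmul (zpow a x) (gmul (zpow b y) (gmul (zpow c z) (gmul (zpow t n) (zpow f m))))
        = gone -> x = 0%Z /\ y = 0%Z /\ z = 0%Z /\ n = 0%Z /\ m = 0%Z.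
Variable htf : torsion_free M.
Variable hroot : forall (x : M) (n : nat), (0 < n)%nat ->
      exists y : M, npow y n = x /\ forall y' : M, npow y' n = x -> y' = y.
Variable s : M.
Variable hs : npow s p = gmul b f.

Notation cm := (commutes M).

Lemma root_comm x y : cm x (npow y p) -> cm x y.
Proof.
  intro H.
  assert (E : npow (conj y x) p = npow y p).
  { rewrite !npow_zpow, <- conj_zpow, <- npow_zpow.
    apply commutes_conj. apply commutes_sym. exact H. }
  destruct (hroot (npow y p) p ltac:(lia)) as [r [_ U]].
  assert (E2 : conj y x = y) by (rewrite (U _ E), (U y eq_refl); reflexivity).
  unfold commutes. rewrite <- E2 at 1. rewrite conj_eq. reflexivity.
Qed.

Lemma cmb_f : cm b f. Proof. unfold commutes. auto. Qed.

Lemma cs_b : cm s b.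
Proof. apply commutes_sym, root_comm. rewrite hs. apply commutes_mul. apply commutes_refl. apply cmb_f. Qed.
Lemma cs_f : cm s f.
Proof. apply commutes_sym, root_comm. rewrite hs. apply commutes_mul. exact hfb. apply commutes_refl. Qed.
Lemma cs_a : cm s a.
Proof. apply commutes_sym, root_comm. rewrite hs. apply commutes_mul. exact hab. unfold commutes; auto. Qed.
Lemma cs_c : cm s c.
Proof. apply commutes_sym, root_comm. rewrite hs. apply commutes_mul. unfold commutes; auto. unfold commutes; auto. Qed.
Lemma cft : cm f t. Proof. exact hft. Qed.
Lemma cbf_c : cm c t.
Proof. unfold commutes. rewrite <- conj_eq, htc. reflexivity. Qed.

Definition u := comm s t.

Lemma conj_s : conj s t = s ** u.
Proof. unfold u, comm. rewrite mulVK. reflexivity. Qed.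

Lemma conj_f : conj f t = f.
Proof. apply commutes_conj. exact hft. Qed.

Lemma cs_u : cm s u.
Proof.
  assert (C : cm s (conj s t)).
  { apply root_comm. rewrite !npow_zpow, <- conj_zpow, <- npow_zpow, hs, conj_mul, htb, conj_f.
    apply commutes_mul. apply commutes_mul. apply cs_b. apply cs_c. apply cs_f. }
  unfold u, comm. apply commutes_mul. apply commutes_inv, commutes_refl. exact C.
Qed.

Lemma u_p : npow u p = c.
Proof.
  assert (E : npow (conj s t) p = b ** c ** f).
  { rewrite !npow_zpow, <- conj_zpow, <- npow_zpow, hs, conj_mul, htb, conj_f. reflexivity. }
  rewrite conj_s, !npow_zpow, zpow_mulC, <- !npow_zpow, hs in E by apply cs_u.
  apply (gcancel_l _ (b ** f)). rewrite E. rewrite <- !gmulA. f_equal. symmetry. exact hfc.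
Qed.

Lemma cu x : cm x c -> cm x u.
Proof. intro H. apply root_comm. rewrite u_p. exact H. Qed.

Lemma cu_a : cm u a. Proof. apply commutes_sym, cu. exact hac. Qed.
Lemma cu_b : cm u b. Proof. apply commutes_sym, cu. exact hbc. Qed.
Lemma cu_t : cm u t. Proof. apply commutes_sym, cu. apply commutes_sym, cbf_c. Qed.
Lemma cu_s : cm u s. Proof. apply commutes_sym, cs_u. Qed.

Lemma conj_u : conj u t = u.
Proof. apply commutes_conj, cu_t. Qed.
Lemma conj_b : conj b t = b ** zpow u (Z.of_nat p).
Proof. rewrite htb, zpow_nat, u_p. reflexivity. Qed.


Lemma c_ab : cm a b. Proof. exact hab. Qed.
Lemma c_as : cm a s. Proof. apply commutes_sym, cs_a. Qed.
Lemma c_au : cm a u. Proof. apply commutes_sym, cu_a. Qed.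
Lemma c_bs : cm b s. Proof. apply commutes_sym, cs_b. Qed.
Lemma c_bu : cm b u. Proof. apply commutes_sym, cu_b. Qed.
Lemma c_su : cm s u. Proof. apply cs_u. Qed.
Lemma c_ba : cm b a. Proof. apply commutes_sym, c_ab. Qed.
Lemma c_sa : cm s a. Proof. apply cs_a. Qed.
Lemma c_ua : cm u a. Proof. apply cu_a. Qed.
Lemma c_sb : cm s b. Proof. apply cs_b. Qed.
Lemma c_ub : cm u b. Proof. apply cu_b. Qed.
Lemma c_us : cm u s. Proof. apply cu_s. Qed.
Lemma c_refl x : cm x x. Proof. apply commutes_refl. Qed.

Hint Resolve c_ab c_as c_au c_bs c_bu c_su c_ba c_sa c_ua c_sb c_ub c_us c_refl : cdb.

Ltac csolve :=
  match goal with
  | |- commutes _ (?x ** ?y) ?z => apply commutes_sym; apply commutes_mul; apply commutes_sym; csolve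
  | |- commutes _ ?z (?x ** ?y) => apply commutes_mul; csolve
  | |- commutes _ (zpow ?x _) (zpow ?y _) => apply commutes_zpow2; auto with cdb
  | |- commutes _ ?x (zpow ?y _) => apply commutes_zpow; auto with cdb
  | |- commutes _ (zpow ?x _) ?y => apply commutes_sym, commutes_zpow; auto with cdb
  | _ => auto with cdb
  end.

Lemma swap_mid x y z w : cm y z -> x ** y ** (z ** w) = x ** z ** (y ** w).
Proof.
  intro H. rewrite gmulA, <- (gmulA _ x y z), H, !gmulA. reflexivity.
Qed.

Definition P := Z.of_nat p.
Definition v x y z w := zpow a x ** (zpow b y ** (zpow s z ** zpow u w)).

Lemma v_mul x y z w x' y' z' w' :
  v x y z w ** v x' y' z' w' = v (x + x') (y + y') (z + z') (w + w').
Proof.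
  unfold v. rewrite swap_mid by csolve. rewrite zpow_add. f_equal.
  rewrite swap_mid by csolve. rewrite zpow_add. f_equal.
  rewrite swap_mid by csolve. rewrite !zpow_add. reflexivity.
Qed.

Lemma v0 : v 0 0 0 0 = gone.
Proof. unfold v. simpl. rewrite !gmul1l. reflexivity. Qed.

Lemma v_inv x y z w : ginv (v x y z w) = v (-x) (-y) (-z) (-w).
Proof.
  symmetry. apply ginv_uniq. rewrite v_mul, !Z.add_opp_diag_r. apply v0.
Qed.

Lemma v_comm x y z w x' y' z' w' : cm (v x y z w) (v x' y' z' w').
Proof.
  unfold commutes. rewrite !v_mul. f_equal; lia.
Qed.

Lemma va x : zpow a x = v x 0 0 0.
Proof. unfold v. simpl. rewrite !gmul1r. reflexivity. Qed.
Lemma vb x : zpow b x = v 0 x 0 0.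
Proof. unfold v. simpl. rewrite !gmul1r, gmul1l. reflexivity. Qed.
Lemma vs x : zpow s x = v 0 0 x 0.
Proof. unfold v. simpl. rewrite !gmul1r, !gmul1l. reflexivity. Qed.
Lemma vu x : zpow u x = v 0 0 0 x.
Proof. unfold v. simpl. rewrite !gmul1l. reflexivity. Qed.

Lemma v_conj x y z w : conj (v x y z w) t = v x (x + y) z (w + P * y + z).
Proof.
  unfold v at 1. rewrite !conj_mul, !conj_zpow, hta, conj_b, conj_s, conj_u.
  rewrite !zpow_mulC by csolve. rewrite <- zpow_mulZ. fold P.
  rewrite (va x), (vb x), (vb y), (vu (P * y)), (vs z), (vu z), (vu w).
  rewrite !v_mul. f_equal; lia.
Qed.

Lemma v_t x y z w : v x y z w ** t = t ** v x (x + y) z (w + P * y + z).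
Proof. rewrite <- v_conj, conj_eq. reflexivity. Qed.

Lemma v_tinv x y z w : v x y z w ** ginv t = ginv t ** v x (y - x) z (w - P * (y - x) - z).
Proof.
  pose proof (v_t x (y - x) z (w - P * (y - x) - z)) as E.
  replace (x + (y - x))%Z with y in E by lia.
  replace (w - P * (y - x) - z + P * (y - x) + z)%Z with w in E by lia.
  apply (gcancel_r _ t). rewrite mulVr, <- gmulA, E, mulKV. reflexivity.
Qed.

Lemma Ppos : (P > 0)%Z.
Proof. unfold P. lia. Qed.

Lemma shift n : forall x y z w, exists y' w', v x y z w ** zpow t n = zpow t n ** v x y' z w'.
Proof.
  induction n using Zind; intros x y z w.
  - exists y, w. rewrite zpow0, gmul1l, gmul1r. reflexivity.
  - destruct (IHn x y z w) as [y' [w' E]].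
    eexists; eexists. rewrite zpow_succ, gmulA, E, <- gmulA, v_t, gmulA. reflexivity.
  - destruct (IHn x y z w) as [y' [w' E]].
    eexists; eexists. rewrite zpow_pred, gmulA, E, <- gmulA, v_tinv, gmulA. reflexivity.
Qed.

Lemma shift0 n : forall y w, v 0 y 0 w ** zpow t n = zpow t n ** v 0 y 0 (w + P * n * y).
Proof.
  induction n using Zind; intros y w.
  - rewrite zpow0, gmul1l, gmul1r. f_equal. lia.
  - rewrite zpow_succ, gmulA, IHn, <- gmulA, v_t, gmulA. f_equal. f_equal; ring.
  - rewrite zpow_pred, gmulA, IHn, <- gmulA, v_tinv, gmulA. f_equal. f_equal; ring.
Qed.

Lemma zpow_v x y z w n : zpow (v x y z w) n = v (x * n) (y * n) (z * n) (w * n).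
Proof.
  induction n using Zind.
  - rewrite !Z.mul_0_r. symmetry. apply v0.
  - rewrite zpow_succ, IHn, v_mul. f_equal; ring.
  - rewrite zpow_pred, IHn, v_inv, v_mul. f_equal; ring.
Qed.

Lemma key k x y z w : zpow t k = v x y z w -> k = 0%Z /\ x = 0%Z /\ y = 0%Z /\ z = 0%Z /\ w = 0%Z.
Proof.
  intro E. pose proof Ppos as HP.
  assert (E1 : zpow t (k * P) = zpow a (x * P) ** (zpow b (y * P) ** ((zpow b z ** zpow f z) ** zpow c w))).
  { rewrite zpow_mulZ, E, zpow_v. unfold v. f_equal. f_equal.
    rewrite (Z.mul_comm z), (Z.mul_comm w), !zpow_mulZ. unfold P. rewrite !zpow_nat, hs, u_p.
    rewrite zpow_mulC by exact cmb_f. reflexivity. }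
  assert (E2 : zpow a (x * P) ** (zpow b (y * P + z) ** (zpow c w ** (zpow t (- (k * P)) ** zpow f z))) = gone).
  { rewrite (commutes_zpow2 _ t f) by (apply commutes_sym; exact hft).
    rewrite (gmulA _ (zpow c w)), (commutes_zpow2 _ c f) by (unfold commutes; auto).
    transitivity (zpow a (x * P) ** (zpow b (y * P) ** ((zpow b z ** zpow f z) ** zpow c w)) ** zpow t (- (k * P))).
    - rewrite zpow_add, !gmulA. reflexivity.
    - rewrite <- E1, <- zpow_add, Z.add_opp_diag_r. reflexivity. }
  destruct (hK _ _ _ _ _ E2) as [h1 [h2 [h3 [h4 h5]]]].
  subst. nia.
Qed.

Definition NF g n x y z w := g = zpow t n ** v x y z w.

Lemma nf_uniq g n x y z w n' x' y' z' w' : NF g n x y z w -> NF g n' x' y' z' w' ->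
  n = n' /\ x = x' /\ y = y' /\ z = z' /\ w = w'.
Proof.
  unfold NF. intros E1 E2. rewrite E1 in E2.
  assert (E3 : zpow t (- n' + n) = v (x' + - x) (y' + - y) (z' + - z) (w' + - w)).
  { rewrite zpow_add, zpow_opp, <- v_mul, <- v_inv. apply (gcancel_r _ (v x y z w)).
    rewrite mulVr, <- gmulA, E2, mulKV. reflexivity. }
  apply key in E3. lia.
Qed.

Lemma nf_mul g1 g2 n x y z w m x' y' z' w' : NF g1 n x y z w -> NF g2 m x' y' z' w' ->
  exists Y W, NF (g1 ** g2) (n + m) (x + x') Y (z + z') W.
Proof.
  unfold NF. intros -> ->. destruct (shift m x y z w) as [y1 [w1 E]].
  eexists; eexists. rewrite zpow_add, <- !gmulA. f_equal.
  rewrite gmulA, E, <- gmulA, v_mul. reflexivity.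
Qed.

Lemma nf_inv g n x y z w : NF g n x y z w -> exists Y W, NF (ginv g) (- n) (- x) Y (- z) W.
Proof.
  unfold NF. intros ->. destruct (shift (- n) (- x) (- y) (- z) (- w)) as [y1 [w1 E]].
  exists y1, w1. rewrite ginvM, v_inv, <- zpow_opp. exact E.
Qed.

Lemma nf_v x y z w : NF (v x y z w) 0 x y z w.
Proof. unfold NF. rewrite zpow0, gmul1l. reflexivity. Qed.

Definition S0 (z : M) := z = a \/ z = b \/ z = c \/ z = t \/ z = f \/ z = s.
Definition GG := gen S0.

Lemma nf_gen g : GG g -> exists n x y z w, NF g n x y z w.
Proof.
  induction 1 as [g Hg| |g1 g2 _ [n [x [y [z [w H1]]]]] _ [n' [x' [y' [z' [w' H2]]]]]
                 |g _ [n [x [y [z [w H1]]]]]].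
  - destruct Hg as [->|[->|[->|[->|[->| ->]]]]].
    + exists 0%Z, 1%Z, 0%Z, 0%Z, 0%Z. unfold NF. rewrite <- va, zpow0, zpow1, gmul1l. reflexivity.
    + exists 0%Z, 0%Z, 1%Z, 0%Z, 0%Z. unfold NF. rewrite <- vb, zpow0, zpow1, gmul1l. reflexivity.
    + exists 0%Z, 0%Z, 0%Z, 0%Z, P. unfold NF. rewrite <- vu, zpow0, gmul1l.
      unfold P. rewrite zpow_nat, u_p. reflexivity.
    + exists 1%Z, 0%Z, 0%Z, 0%Z, 0%Z. unfold NF. rewrite v0, zpow1, gmul1r. reflexivity.
    + exists 0%Z, 0%Z, (-1)%Z, P, 0%Z. unfold NF. rewrite zpow0, gmul1l.
      replace (v 0 (-1) P 0) with (v 0 (-1) 0 0 ** v 0 0 P 0) by (rewrite v_mul; f_equal).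
      rewrite <- vb, <- vs. unfold P. rewrite zpow_nat, hs. simpl. rewrite gmul1r.
      rewrite mulKV. reflexivity.
    + exists 0%Z, 0%Z, 0%Z, 1%Z, 0%Z. unfold NF. rewrite <- vs, zpow0, zpow1, gmul1l. reflexivity.
  - exists 0%Z, 0%Z, 0%Z, 0%Z, 0%Z. unfold NF. rewrite v0, zpow0, gmul1l. reflexivity.
  - destruct (nf_mul _ _ _ _ _ _ _ _ _ _ _ _ H1 H2) as [Y [W H]]. do 5 eexists; exact H.
  - destruct (nf_inv _ _ _ _ _ _ H1) as [Y [W H]]. do 5 eexists; exact H.
Qed.

Lemma comm_form g1 g2 : GG g1 -> GG g2 -> exists y w, comm g1 g2 = v 0 y 0 w.
Proof.
  intros G1 G2.
  destruct (nf_gen _ G1) as [n [x [y [z [w H1]]]]].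
  destruct (nf_gen _ G2) as [m [x' [y' [z' [w' H2]]]]].
  destruct (nf_inv _ _ _ _ _ _ H1) as [Y1 [W1 I1]].
  destruct (nf_inv _ _ _ _ _ _ H2) as [Y2 [W2 I2]].
  destruct (nf_mul _ _ _ _ _ _ _ _ _ _ _ _ H1 H2) as [Y3 [W3 M3]].
  destruct (nf_mul _ _ _ _ _ _ _ _ _ _ _ _ I2 M3) as [Y4 [W4 M4]].
  destruct (nf_mul _ _ _ _ _ _ _ _ _ _ _ _ I1 M4) as [Y5 [W5 M5]].
  exists Y5, W5. unfold NF in M5. unfold comm. rewrite M5.
  replace (- n + (- m + (n + m)))%Z with 0%Z by lia.
  replace (- x + (- x' + (x + x')))%Z with 0%Z by lia.
  replace (- z + (- z' + (z + z')))%Z with 0%Z by lia.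
  rewrite zpow0, gmul1l. reflexivity.
Qed.

Lemma deg0 g y0 w0 : GG g -> cm g (v 0 y0 0 w0) -> y0 <> 0%Z -> exists x y z w, g = v x y z w.
Proof.
  intros Gg C Hy. pose proof Ppos.
  destruct (nf_gen _ Gg) as [n [x [y [z [w H1]]]]].
  assert (N1 : NF (g ** v 0 y0 0 w0) n (x + 0) (y + y0) (z + 0) (w + w0)).
  { unfold NF in *. rewrite H1, <- gmulA, v_mul. reflexivity. }
  assert (N2 : NF (g ** v 0 y0 0 w0) n (0 + x) (y0 + y) (0 + z) (w0 + P * n * y0 + w)).
  { unfold NF in *. rewrite C, H1, gmulA, shift0, <- gmulA, v_mul. reflexivity. }
  destruct (nf_uniq _ _ _ _ _ _ _ _ _ _ _ N1 N2) as [_ [_ [_ [_ Hw]]]].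
  assert (n = 0%Z) by nia. subst n.
  exists x, y, z, w. rewrite H1, zpow0, gmul1l. reflexivity.
Qed.

Lemma center g : GG g -> cm g b -> cm g t -> exists y w, g = v 0 y (- (P * y)) w.
Proof.
  intros Gg Cb Ct.
  rewrite <- (zpow1 _ b), vb in Cb.
  destruct (deg0 _ _ _ Gg Cb ltac:(lia)) as [x [y [z [w ->]]]].
  unfold commutes in Ct. rewrite v_t in Ct. apply gcancel_l in Ct.
  destruct (nf_uniq _ _ _ _ _ _ _ _ _ _ _ (nf_v x y z w) (eq_ind_r (fun q => NF q 0 _ _ _ _) (nf_v x (x + y) z (w + P * y + z)) (eq_sym Ct)))
    as [_ [_ [E1 [_ E2]]]].
  exists y, w. f_equal; lia.
Qed.

Lemma torsion (x : M) m : zpow x m = gone -> m <> 0%Z -> x = gone.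
Proof.
  intros E Hm. destruct (Z_cases m) as [[n ->]|[n ->]].
  - rewrite zpow_nat in E. apply (htf x n); auto. lia.
  - rewrite zpow_opp, zpow_nat in E. apply (htf x (S n)). lia.
    rewrite <- (ginvK _ (npow x (S n))), E. apply ginv1.
Qed.

Lemma b_comm : comm a t = b.
Proof. unfold comm. change (ginv t ** (a ** t)) with (conj a t). rewrite hta, mulKV. reflexivity. Qed.

Lemma GG_a : GG a. Proof. apply gen_in. unfold S0; tauto. Qed.
Lemma GG_b : GG b. Proof. apply gen_in. unfold S0; tauto. Qed.
Lemma GG_t : GG t. Proof. apply gen_in. unfold S0; tauto. Qed.
Lemma GG_s : GG s. Proof. apply gen_in. unfold S0; tauto. Qed.
Lemma GG_u : GG u.
Proof. pose proof GG_s. pose proof GG_t. unfold GG in *. unfold u, comm. apply gen_mul. apply gen_inv; auto. apply gen_mul. apply gen_inv; auto. apply gen_mul; auto. Qed.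

Lemma ab_case H L : direct_decomposition M GG H L -> (forall x y, L x -> L y -> cm x y) -> trivial_sub M L.
Proof.
  intros D Lab. pose proof D as [SH [SL [HG [LG [Hn [Ln [Hint Hdec]]]]]]].
  assert (Cen : forall l g, L l -> GG g -> cm l g).
  { intros l g Ll Gg. destruct (Hdec g Gg) as [h [l' [Hh [Hl' ->]]]].
    apply commutes_mul. apply commutes_sym, (dd_commute _ _ _ _ _ _ D); auto. auto. }
  destruct (Hdec s GG_s) as [hs' [ls [Hhs [Lls Es]]]].
  destruct (Hdec t GG_t) as [ht [lt [Hht [Llt Et]]]].
  destruct (Hdec a GG_a) as [ha [la [Hha [Lla Ea]]]].
  assert (Hb : H b).
  { rewrite <- b_comm, Ea, Et, comm_central; auto using HG, LG.
    apply sub_comm; auto. }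
  assert (Hu : H u).
  { unfold u. rewrite Es, Et, comm_central; auto using HG, LG.
    apply sub_comm; auto. }
  assert (Vin : forall y z w, H s -> H (v 0 y z w)).
  { intros y z w Hs. unfold v. destruct SH as [H1 [Hm Hi]].
    apply Hm. exact H1. apply Hm. apply (sub_zpow _ H); auto. split; auto.
    apply Hm; apply (sub_zpow _ H); auto; split; auto. }
  assert (Hs : H s).
  { destruct (center ls (LG _ Lls) (Cen _ _ Lls GG_b) (Cen _ _ Lls GG_t)) as [y [w Ev]].
    set (k := (- (P * y))%Z) in Ev.
    assert (E2 : ls = (zpow b y ** (zpow hs' k ** zpow u w)) ** zpow ls k).
    { rewrite Ev at 1. unfold v. rewrite zpow0, gmul1l, Es.
      rewrite zpow_mulC by (apply (dd_commute _ _ _ _ _ _ D); auto).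
      rewrite <- !gmulA. f_equal. f_equal.
      apply commutes_zpow2. apply Cen; auto using GG_u. }
    assert (E3 : zpow ls (1 + P * y) = zpow b y ** (zpow hs' k ** zpow u w)).
    { replace (1 + P * y)%Z with (1 + - k)%Z by (unfold k; lia).
      rewrite zpow_add, zpow1, zpow_opp. rewrite E2 at 1. apply mulKr. }
    assert (E4 : zpow ls (1 + P * y) = gone).
    { apply Hint.
      - rewrite E3. destruct SH as [H1 [Hm Hi]]. apply Hm. apply (sub_zpow _ H); auto; split; auto.
        apply Hm; apply (sub_zpow _ H); auto; split; auto.
      - apply (sub_zpow _ L); auto. }
    assert (P > 1)%Z by (unfold P; lia).
    assert (Hne : (1 + P * y <> 0)%Z) by (destruct (Z_le_gt_dec 0 y); nia). apply torsion in E4; [| exact Hne].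
    rewrite Es, E4, gmul1r. exact Hhs. }
  intros l Ll.
  destruct (center l (LG _ Ll) (Cen _ _ Ll GG_b) (Cen _ _ Ll GG_t)) as [y [w Ev]].
  apply Hint; auto. rewrite Ev. apply Vin, Hs.
Qed.

Lemma one_side H L h1 h2 l1 l2 : direct_decomposition M GG H L -> H h1 -> H h2 -> L l1 -> L l2 ->
  ~ cm l1 l2 -> exists w, comm h1 h2 = zpow u w.
Proof.
  intros D Hh1 Hh2 Ll1 Ll2 NC. pose proof D as [SH [SL [HG [LG [Hn [Ln [Hint Hdec]]]]]]].
  destruct (comm_form h1 h2 (HG _ Hh1) (HG _ Hh2)) as [y [w Ev]].
  destruct (Z.eq_dec y 0) as [->|Hy].
  - exists w. rewrite Ev, vu. reflexivity.
  - exfalso. apply NC.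
    assert (Hk : H (comm h1 h2)) by (apply sub_comm; auto).
    assert (C1 : cm l1 (v 0 y 0 w)) by (rewrite <- Ev; apply commutes_sym, (dd_commute _ _ _ _ _ _ D); auto).
    assert (C2 : cm l2 (v 0 y 0 w)) by (rewrite <- Ev; apply commutes_sym, (dd_commute _ _ _ _ _ _ D); auto).
    destruct (deg0 _ _ _ (LG _ Ll1) C1 Hy) as [x1 [y1 [z1 [w1 ->]]]].
    destruct (deg0 _ _ _ (LG _ Ll2) C2 Hy) as [x2 [y2 [z2 [w2 ->]]]].
    apply v_comm.
Qed.

Lemma u_pow_one m : zpow u m = gone -> m = 0%Z.
Proof.
  intro E. rewrite vu in E. rewrite <- v0 in E.
  destruct (nf_uniq _ _ _ _ _ _ _ _ _ _ _ (nf_v 0 0 0 m) (eq_ind_r (fun q => NF q 0 0 0 0 0) (nf_v 0 0 0 0) E)) as [_ [_ [_ [_ Hm]]]].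
  exact Hm.
Qed.

Lemma main_sec : directly_indecomposable GG.
Proof.
  intros H L D.
  destruct (classic (forall x y, L x -> L y -> cm x y)) as [LA|LN].
  { right. apply (ab_case H L D LA). }
  destruct (classic (forall x y, H x -> H y -> cm x y)) as [HA|HN].
  { left. apply (ab_case L H (dd_sym _ _ _ _ D) HA). }
  exfalso.
  assert (EL : exists x y, L x /\ L y /\ ~ cm x y).
  { apply NNPP. intro N. apply LN. intros x y Lx Ly. apply NNPP. intro N2. apply N. eauto. }
  assert (EH : exists x y, H x /\ H y /\ ~ cm x y).
  { apply NNPP. intro N. apply HN. intros x y Lx Ly. apply NNPP. intro N2. apply N. eauto. }
  destruct EL as [l1 [l2 [Ll1 [Ll2 NL]]]]. destruct EH as [h1 [h2 [Hh1 [Hh2 NH]]]].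
  destruct (one_side H L h1 h2 l1 l2 D Hh1 Hh2 Ll1 Ll2 NL) as [w Ew].
  destruct (one_side L H l1 l2 h1 h2 (dd_sym _ _ _ _ D) Ll1 Ll2 Hh1 Hh2 NH) as [w' Ew'].
  pose proof D as [SH [SL [HG [LG [Hn [Ln [Hint Hdec]]]]]]].
  assert (Hw : w <> 0%Z).
  { intros ->. apply NH, comm_one_commutes. rewrite Ew. reflexivity. }
  assert (Hw' : w' <> 0%Z).
  { intros ->. apply NL, comm_one_commutes. rewrite Ew'. reflexivity. }
  assert (E : zpow u (w * w') = gone).
  { apply Hint.
    - rewrite zpow_mulZ, <- Ew. apply (sub_zpow _ H); auto. apply sub_comm; auto.
    - rewrite Z.mul_comm, zpow_mulZ, <- Ew'. apply (sub_zpow _ L); auto. apply sub_comm; auto. }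
  apply u_pow_one in E. nia.
Qed.

End Main.
Theorem mainTheorem18 (p : nat) (hp : (1 < p)%nat)
  (M : Group) (a b c t f : M)
  (* A = <a,b,c> abelian *)
  (hab : gmul a b = gmul b a) (hac : gmul a c = gmul c a) (hbc : gmul b c = gmul c b)
  (* HNN relations *)
  (hta : conj a t = gmul a b) (htb : conj b t = gmul b c) (htc : conj c t = c)
  (* F = <f> commutes with B *)
  (hfa : gmul f a = gmul a f) (hfb : gmul f b = gmul b f)
  (hfc : gmul f c = gmul c f) (hft : gmul f t = gmul t f)
  (* faithfulness: the subgroup <a,b,c,t,f> is isomorphic to K *)
  (hK : forall x y z n m : Z,
      gmul (zpow a x) (gmul (zpow b y) (gmul (zpow c z) (gmul (zpow t n) (zpow f m))))
        = gone -> x = 0%Z /\ y = 0%Z /\ z = 0%Z /\ n = 0%Z /\ m = 0%Z)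
  (* M is a rational closure of K *)
  (hnil : nilpotent M) (htf : torsion_free M)
  (hroot : forall (x : M) (n : nat), (0 < n)%nat ->
      exists y : M, npow y n = x /\ forall y' : M, npow y' n = x -> y' = y)
  (hpow : forall x : M, exists n : nat, (0 < n)%nat /\
      gen (fun z => z = a \/ z = b \/ z = c \/ z = t \/ z = f) (npow x n))
  (* s is the p-th root of bf *)
  (s : M) (hs : npow s p = gmul b f) :
  directly_indecomposable
    (gen (fun z => z = a \/ z = b \/ z = c \/ z = t \/ z = f \/ z = s)).
Proof.
  intros. eapply main_sec; eassumption.
Qed.
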